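(* Let $H$ be a Hilbert space of dimension $N>1$, let $\mathcal F=\mathcal F(H)$ be the full Fock space, and let $v\in H$ with $\|v\|=1$. Then $$\mathbb{C}\Omega\oplus\sum_{w\in H\ominus\{v\}}\operatorname{Ran}(T_w)=N(T_v^* ),$$ where $H\ominus\{v\}=\{w\in H:\langle w,v\rangle=0\}$, $\operatorname{Ran}$ denotes range and $N(T_v^* )$ is the kernel of $T_v^*$.
   Context: $\mathcal F(H)=\mathbb{C}\Omega\oplus H\oplus(H\otimes H)\oplus\cdots$ (Hilbert direct sum, $\Omega$ a fixed unit vector). For $v\in H$, $T_v$ is the operator on $\mathcal F$ with $T_v\Omega=v$ and $T_v\xi=\xi\otimes v$ for $\xi\in H^{\otimes n}$, $n\ge1$. The sum on the left is the closed linear span of the indicated subspaces. *)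

(* Defs.v *)
From HB Require Import structures.
From mathcomp Require Import all_boot all_order all_algebra.
From mathcomp Require Import all_classical all_reals ereal esum.
From mathcomp Require Import complex.

Set Implicit Arguments.
Unset Strict Implicit.
Unset Printing Implicit Defensive.

Import Order.TTheory GRing.Theory Num.Theory.
Local Open Scope classical_set_scope.
Local Open Scope ring_scope.

(* Concrete model: H = l^2(I) for an index set I (an orthonormal basis of H,
   so dim H = |I|); H^{(x) n} = l^2(I^n); the full Fock space
   F(H) = l^2(seq I) (words of length n <-> the n-th tensor power,
   the empty word <-> Omega). *)

Section Fock.
Variable R : realType.
Local Notation C := R[i].

Definition sqmod (z : C) : R := complex.Re z ^+ 2 + complex.Im z ^+ 2.

Definition sqnorm {T : choiceType} (f : T -> C) : \bar R :=
  esum [set: T] (fun t => (sqmod (f t))%:E).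

Definition l2 {T : choiceType} (f : T -> C) : Prop := (sqnorm f < +oo)%E.

Definition rsum {T : choiceType} (a : T -> R) : R :=
  fine (esum [set: T] (fun t => (Num.max (a t) 0)%:E)) -
  fine (esum [set: T] (fun t => (Num.max (- a t) 0)%:E)).

Definition csum {T : choiceType} (a : T -> C) : C :=
  Complex (rsum (fun t => complex.Re (a t))) (rsum (fun t => complex.Im (a t))).

(* inner product on l^2(T), linear in the first variable *)
Definition inner {T : choiceType} (f g : T -> C) : C :=
  csum (fun t => f t * conjc (g t)).

Variable I : choiceType.

Definition Hsp : set (I -> C) := [set v | l2 v].
Definition Fock : set (seq I -> C) := [set f | l2 f].

Definition Omega : seq I -> C := fun u => (u == [::])%:R.

(* creation operator T_v : T_v Omega = v, T_v xi = xi (x) v;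
   on coordinates (T_v f)(rcons w i) = f w * v i, (T_v f)([::]) = 0 *)
Definition Tcre (v : I -> C) (f : seq I -> C) : seq I -> C :=
  fun u => match u with
           | [::] => 0
           | x :: s => f (belast x s) * v (last x s)
           end.

Definition Ran (T : (seq I -> C) -> (seq I -> C)) : set (seq I -> C) :=
  [set f | exists2 g, Fock g & f = T g].

(* h = T^* f  (defining relation of the adjoint) *)
Definition adjoint_rel (T : (seq I -> C) -> (seq I -> C)) (f h : seq I -> C) :=
  Fock h /\ forall g, Fock g -> inner (T g) f = inner g h.

Definition ker_adj (T : (seq I -> C) -> (seq I -> C)) : set (seq I -> C) :=
  [set f | Fock f /\ adjoint_rel T f (fun _ => 0)].

Definition lspan (S : set (seq I -> C)) : set (seq I -> C) :=
  [set f | exists (n : nat) (c : 'I_n -> C) (g : 'I_n -> seq I -> C),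
      (forall k, S (g k)) /\ f = (fun u => \sum_(k < n) c k * g k u)].

Definition cspan (S : set (seq I -> C)) : set (seq I -> C) :=
  [set f | Fock f /\ forall e : R, 0 < e ->
      exists2 g, lspan S g &
        (sqnorm (fun u => (f u - g u)%R) < (e ^+ 2)%:E)%E].

Definition lhs_set (v : I -> C) : set (seq I -> C) :=
  [set f | exists c : C, f = (fun u => c * Omega u)] `|`
  [set f | exists2 w, (Hsp w /\ inner w v = 0) & Ran (Tcre w) f].

End Fock.

(* Main.v *)
Require Import Defs.
From HB Require Import structures.
From mathcomp Require Import all_boot all_order all_algebra.
From mathcomp Require Import all_classical all_reals ereal esum.
From mathcomp Require Import complex.
From mathcomp Require Import finmap.
From mathcomp Require Import ring lra.
Set Implicit Arguments.
Unset Strict Implicit.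
Unset Printing Implicit Defensive.
Import Order.TTheory GRing.Theory Num.Theory.
Local Open Scope classical_set_scope.
Local Open Scope ring_scope.
Section RealSum.
Variables (R : realType) (T : choiceType).
Implicit Types (a b : T -> R).

Definition esT a : \bar R := esum [set: T] (fun t => (a t)%:E).
Definition posp a t := Num.max (a t) 0.
Definition negp a t := Num.max (- a t) 0.

Lemma pn (x : R) : Num.max x 0 - Num.max (- x) 0 = x.
Proof. rewrite !maxEle; case: ifP; case: ifP; lra. Qed.
Lemma pn2 (x : R) : 0 <= Num.max x 0 <= `|x|.
Proof. rewrite !maxEle; case: ifP => h. rewrite lexx normr_ge0 //.
 rewrite ler_norm andbT. lra. Qed.

Lemma rsumE a : rsum a = fine (esT (posp a)) - fine (esT (negp a)).
Proof. by []. Qed.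

Definition bdd a := exists M, forall s : seq T, uniq s -> \sum_(x <- s) `|a x| <= M.
Definition HasSum a l := forall e : R, 0 < e -> exists s0 : seq T,
   forall s, uniq s -> {subset s0 <= s} -> `|l - \sum_(x <- s) a x| < e.

Lemma seq_le_esT a s : (forall t, 0 <= a t) -> uniq s ->
  ((\sum_(x <- s) a x)%:E <= esT a)%E.
Proof.
move=> a0 us; rewrite -sumEFin fsbig_seq //; apply: esum_ge.
by exists [set` s] => //; split=> //; exact: finite_seq.
Qed.

Lemma esT_le a M : (forall t, 0 <= a t) ->
  (forall s, uniq s -> \sum_(x <- s) a x <= M) -> (esT a <= M%:E)%E.
Proof.
move=> a0 H; apply: ge_ereal_sup => _ [X [finX _] <-].
rewrite fsbig_finite // sumEFin lee_fin; apply: H; exact: fset_uniq.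
Qed.

Lemma esT_ge0 a : (forall t, 0 <= a t) -> (0 <= esT a)%E.
Proof. by move=> a0; apply: esum_ge0 => t _; rewrite lee_fin. Qed.

Lemma esT_approx a e : (forall t, 0 <= a t) -> esT a \is a fin_num -> 0 < e ->
  exists2 s, uniq s & fine (esT a) - e < \sum_(x <- s) a x.
Proof.
move=> a0 fa e0.
have : ((fine (esT a) - e)%:E < esT a)%E.
  by rewrite -{2}(fineK fa) lte_fin ltrBlDr ltrDl.
move=> /ereal_sup_gt [_ [X [finX _] <-]].
rewrite fsbig_finite // sumEFin lte_fin => H.
by exists (fset_set X) => //; exact: fset_uniq.
Qed.

Lemma sum_sub_le a s0 s : (forall t, 0 <= a t) -> uniq s0 -> uniq s ->
  {subset s0 <= s} -> \sum_(x <- s0) a x <= \sum_(x <- s) a x.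
Proof.
move=> a0 u0 u sub.
have pe : perm_eq [seq x <- s | x \in s0] s0.
  apply: uniq_perm => //; first exact: filter_uniq.
  by move=> x; rewrite mem_filter; case: (boolP (x \in s0)) => // /sub ->.
rewrite -(perm_big _ pe) /= big_filter big_mkcond /=.
by apply: ler_sum => i _; case: ifP.
Qed.

Lemma bdd_esT a : bdd a -> forall b, (forall t, 0 <= b t <= `|a t|) -> esT b \is a fin_num.
Proof.
move=> [M HM] b hb; rewrite ge0_fin_numE; last first.
  by apply: esT_ge0 => t; case/andP: (hb t).
apply: (@le_lt_trans _ _ M%:E); last exact: ltry.
apply: esT_le => [t|s us]; first by case/andP: (hb t).
apply: le_trans (HM s us); apply: ler_sum => i _; by case/andP: (hb i).
Qed.

Lemma HasSum_rsum a : bdd a -> HasSum a (rsum a).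
Proof.
move=> ba e e0.
have hp t : 0 <= posp a t <= `|a t|.
  exact: pn2.
have hn t : 0 <= negp a t <= `|a t|.
  by rewrite /negp -(normrN (a t)); exact: pn2.
have p0 t : 0 <= posp a t by case/andP: (hp t).
have n0 t : 0 <= negp a t by case/andP: (hn t).
have fp := bdd_esT ba hp; have fn := bdd_esT ba hn.
have e20 : 0 < e / 2 by rewrite divr_gt0.
have [s1 u1 H1] := esT_approx p0 fp e20.
have [s2 u2 H2] := esT_approx n0 fn e20.
exists (s1 ++ s2) => s us sub.
have le1 : \sum_(x <- s1) posp a x <= \sum_(x <- s) posp a x.
  by apply: sum_sub_le => // x hx; apply: sub; rewrite mem_cat hx.
have le2 : \sum_(x <- s2) negp a x <= \sum_(x <- s) negp a x.
  by apply: sum_sub_le => // x hx; apply: sub; rewrite mem_cat hx orbT.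
have up1 : \sum_(x <- s) posp a x <= fine (esT (posp a)).
  by rewrite -lee_fin fineK //; exact: seq_le_esT.
have up2 : \sum_(x <- s) negp a x <= fine (esT (negp a)).
  by rewrite -lee_fin fineK //; exact: seq_le_esT.
have -> : \sum_(x <- s) a x = \sum_(x <- s) posp a x - \sum_(x <- s) negp a x.
  rewrite -sumrB; apply: eq_bigr => i _; rewrite /posp /negp.
  by rewrite pn.
rewrite rsumE ltr_norml; apply/andP; split; lra.
Qed.

Lemma abs_lt_all (x : R) : (forall e, 0 < e -> `|x| < e) -> x = 0.
Proof.
move=> H; apply/eqP; apply: contraT => hx.
have h : 0 < `|x| by rewrite normr_gt0.
by have := H _ h; rewrite ltxx.
Qed.

Lemma HasSum_uniq a l1 l2 : HasSum a l1 -> HasSum a l2 -> l1 = l2.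
Proof.
move=> H1 H2; apply/eqP; rewrite -subr_eq0; apply/eqP/abs_lt_all => e e0.
have e20 : 0 < e / 2 by rewrite divr_gt0.
have [s1 S1] := H1 _ e20; have [s2 S2] := H2 _ e20.
set s := undup (s1 ++ s2).
have u : uniq s := undup_uniq _.
have A : `|l1 - \sum_(x <- s) a x| < e / 2.
  by apply: S1 => // x hx; rewrite mem_undup mem_cat hx.
have B : `|l2 - \sum_(x <- s) a x| < e / 2.
  by apply: S2 => // x hx; rewrite mem_undup mem_cat hx orbT.
rewrite (_ : l1 - l2 = (l1 - \sum_(x <- s) a x) - (l2 - \sum_(x <- s) a x)); last by ring.
apply: le_lt_trans (ler_normB _ _) _; lra.
Qed.
End RealSum.
Section RealSum2.
Variables (R : realType) (T : choiceType).
Implicit Types (a b : T -> R).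

Lemma HasSum_add a b la lb : HasSum a la -> HasSum b lb ->
  HasSum (fun t => a t + b t) (la + lb).
Proof.
move=> Ha Hb e e0; have e20 : 0 < e / 2 by rewrite divr_gt0.
have [s1 S1] := Ha _ e20; have [s2 S2] := Hb _ e20.
exists (s1 ++ s2) => s u sub.
have A : `|la - \sum_(x <- s) a x| < e / 2.
  by apply: S1 => // x hx; apply: sub; rewrite mem_cat hx.
have B : `|lb - \sum_(x <- s) b x| < e / 2.
  by apply: S2 => // x hx; apply: sub; rewrite mem_cat hx orbT.
rewrite big_split /=.
rewrite (_ : la + lb - _ = (la - \sum_(x <- s) a x) + (lb - \sum_(x <- s) b x)); last by ring.
apply: le_lt_trans (ler_normD _ _) _; lra.
Qed.

Lemma HasSum_scale k a la : HasSum a la -> HasSum (fun t => k * a t) (k * la).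
Proof.
move=> Ha e e0.
have k0 : 0 < `|k| + 1 by rewrite ltr_wpDl.
have [s1 S1] := Ha _ (divr_gt0 e0 k0).
exists s1 => s u sub; have A := S1 s u sub.
rewrite -mulr_sumr -mulrBr normrM.
apply: (@le_lt_trans _ _ ((`|k| + 1) * `|la - \sum_(x <- s) a x|)).
  by apply: ler_wpM2r => //; lra.
by rewrite -ltr_pdivlMl // mulrC.
Qed.

Lemma HasSum_ext a b la : (forall t, a t = b t) -> HasSum a la -> HasSum b la.
Proof.
move=> ab Ha e e0; have [s0 S] := Ha e e0; exists s0 => s u sub.
rewrite -(eq_bigr _ (fun t _ => ab t)); exact: S.
Qed.

Lemma HasSum0 : HasSum (fun _ : T => 0 : R) 0.
Proof. by move=> e e0; exists [::] => s _ _; rewrite big1 // subr0 normr0. Qed.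

Lemma HasSum_bound a la B : HasSum a la ->
  (forall s, uniq s -> `|\sum_(x <- s) a x| <= B) -> `|la| <= B.
Proof.
move=> Ha HB; apply/ler_addgt0Pr => e e0.
have [s0 S] := Ha e e0.
have u : uniq (undup s0) := undup_uniq _.
have A := S _ u (fun x hx => (etrans (mem_undup _ _) hx)).
have := HB _ u.
have := ler_normB (la - \sum_(x <- undup s0) a x) (- \sum_(x <- undup s0) a x).
rewrite opprK subrK normrN; lra.
Qed.

Lemma bdd_le a b : bdd a -> (forall t, `|b t| <= `|a t|) -> bdd b.
Proof.
move=> [M HM] h; exists M => s u; apply: le_trans (HM s u).
by apply: ler_sum => i _.
Qed.

Lemma bdd_add a b : bdd a -> bdd b -> bdd (fun t => a t + b t).
Proof.
move=> [M HM] [N HN]; exists (M + N) => s u.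
apply: le_trans (lerD (HM s u) (HN s u)); rewrite -big_split /=.
by apply: ler_sum => i _; exact: ler_normD.
Qed.

Lemma sum_norm_le a s : `|\sum_(x <- s) a x| <= \sum_(x <- s) `|a x|.
Proof. exact: ler_norm_sum. Qed.

Lemma bdd_sum_bound a : bdd a -> exists M, forall s, uniq s -> `|\sum_(x <- s) a x| <= M.
Proof. by move=> [M HM]; exists M => s u; exact: le_trans (ler_norm_sum _ _ _) (HM s u). Qed.
End RealSum2.
Section Cplx.
Variables (R : realType).
Local Notation C := R[i].
Local Notation Re := (@complex.Re R).
Local Notation Im := (@complex.Im R).

Lemma ReD (x y : C) : Re (x + y) = Re x + Re y. Proof. by case: x; case: y. Qed.
Lemma ImD (x y : C) : Im (x + y) = Im x + Im y. Proof. by case: x; case: y. Qed.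
Lemma ReM (x y : C) : Re (x * y) = Re x * Re y - Im x * Im y. Proof. by case: x; case: y. Qed.
Lemma ImM (x y : C) : Im (x * y) = Re x * Im y + Im x * Re y. Proof. by case: x => a b; case: y => c d /=. Qed.
Lemma ReJ (x : C) : Re (conjc x) = Re x. Proof. by case: x. Qed.
Lemma ImJ (x : C) : Im (conjc x) = - Im x. Proof. by case: x. Qed.
Lemma Re0 : Re 0 = 0. Proof. by []. Qed.
Lemma Im0 : Im 0 = 0. Proof. by []. Qed.
Lemma ReN (x : C) : Re (- x) = - Re x. Proof. by case: x. Qed.
Lemma ImN (x : C) : Im (- x) = - Im x. Proof. by case: x. Qed.
Lemma ReB (x y : C) : Re (x - y) = Re x - Re y. Proof. by rewrite ReD ReN. Qed.
Lemma ImB (x y : C) : Im (x - y) = Im x - Im y. Proof. by rewrite ImD ImN. Qed.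
Lemma complex_eq (x y : C) : Re x = Re y -> Im x = Im y -> x = y.
Proof. by case: x => a b; case: y => c d /= -> ->. Qed.

Lemma Re_sum (J : Type) (r : seq J) (F : J -> C) : Re (\sum_(j <- r) F j) = \sum_(j <- r) Re (F j).
Proof. by elim: r => [|j r IH]; rewrite ?big_nil ?big_cons // ReD IH. Qed.
Lemma Im_sum (J : Type) (r : seq J) (F : J -> C) : Im (\sum_(j <- r) F j) = \sum_(j <- r) Im (F j).
Proof. by elim: r => [|j r IH]; rewrite ?big_nil ?big_cons // ImD IH. Qed.

Lemma sqmodM (x y : C) : sqmod (x * y) = sqmod x * sqmod y.
Proof. rewrite /sqmod ReM ImM; ring. Qed.
Lemma sqmod_ge0 (x : C) : 0 <= sqmod x.
Proof. by rewrite /sqmod addr_ge0 // sqr_ge0. Qed.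
Lemma sqmodJ (x : C) : sqmod (conjc x) = sqmod x.
Proof. by rewrite /sqmod ReJ ImJ sqrrN. Qed.

Lemma am_gm (x y z w t s : R) : 0 < t -> t * s = 1 ->
  `|x * y + z * w| <= (t * (x ^+ 2 + z ^+ 2) + s * (y ^+ 2 + w ^+ 2)) / 2.
Proof.
move=> t0 ts.
have h1 : 0 <= t * (x - s * y) ^+ 2 by apply: mulr_ge0; [exact: ltW | exact: sqr_ge0].
have h2 : 0 <= t * (z - s * w) ^+ 2 by apply: mulr_ge0; [exact: ltW | exact: sqr_ge0].
have h3 : 0 <= t * (x + s * y) ^+ 2 by apply: mulr_ge0; [exact: ltW | exact: sqr_ge0].
have h4 : 0 <= t * (z + s * w) ^+ 2 by apply: mulr_ge0; [exact: ltW | exact: sqr_ge0].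
have e1 : t * (x - s * y) ^+ 2 = t * x^+2 - 2 * x * y + s * y ^+2.
  rewrite sqrrB; have -> : t * (x ^+ 2 - (x * (s * y)) *+ 2 + (s * y) ^+ 2) = t * x ^+ 2 - (t * s) * 2 * x * y + (t * s) * s * y ^+ 2 by ring.
  by rewrite ts; ring.
have e2 : t * (z - s * w) ^+ 2 = t * z^+2 - 2 * z * w + s * w ^+2.
  rewrite sqrrB; have -> : t * (z ^+ 2 - (z * (s * w)) *+ 2 + (s * w) ^+ 2) = t * z ^+ 2 - (t * s) * 2 * z * w + (t * s) * s * w ^+ 2 by ring.
  by rewrite ts; ring.
have e3 : t * (x + s * y) ^+ 2 = t * x^+2 + 2 * x * y + s * y ^+2.
  rewrite sqrrD; have -> : t * (x ^+ 2 + (x * (s * y)) *+ 2 + (s * y) ^+ 2) = t * x ^+ 2 + (t * s) * 2 * x * y + (t * s) * s * y ^+ 2 by ring.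
  by rewrite ts; ring.
have e4 : t * (z + s * w) ^+ 2 = t * z^+2 + 2 * z * w + s * w ^+2.
  rewrite sqrrD; have -> : t * (z ^+ 2 + (z * (s * w)) *+ 2 + (s * w) ^+ 2) = t * z ^+ 2 + (t * s) * 2 * z * w + (t * s) * s * w ^+ 2 by ring.
  by rewrite ts; ring.
rewrite ler_norml; apply/andP; split; lra.
Qed.

Lemma Re_pconj_le (p q : C) t s : 0 < t -> t * s = 1 ->
  `|Re (p * conjc q)| <= (t * sqmod p + s * sqmod q) / 2.
Proof.
move=> t0 ts; rewrite ReM ReJ ImJ /sqmod.
rewrite (_ : _ - _ = Re p * Re q + Im p * Im q); last by ring.
exact: am_gm.
Qed.

Lemma Im_pconj_le (p q : C) t s : 0 < t -> t * s = 1 ->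
  `|Im (p * conjc q)| <= (t * sqmod p + s * sqmod q) / 2.
Proof.
move=> t0 ts; rewrite ImM ReJ ImJ /sqmod.
rewrite (_ : _ + _ = Im p * Re q + (- Re p) * Im q); last by ring.
apply: le_trans (am_gm _ _ _ _ t0 ts) _; by rewrite sqrrN [X in t * X]addrC.
Qed.
End Cplx.
Section CSum.
Variables (R : realType) (T : choiceType).
Local Notation C := R[i].
Local Notation Re := (@complex.Re R).
Local Notation Im := (@complex.Im R).
Implicit Types (p q z w f : T -> C).

Definition HasSumC (z : T -> C) (l : C) :=
  HasSum (fun t => Re (z t)) (Re l) /\ HasSum (fun t => Im (z t)) (Im l).
Definition bddC (z : T -> C) := bdd (fun t => Re (z t)) /\ bdd (fun t => Im (z t)).

Lemma HasSumC_csum z : bddC z -> HasSumC z (csum z).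
Proof. by case=> h1 h2; split; apply: HasSum_rsum. Qed.

Lemma HasSumC_uniq z l1 l2 : HasSumC z l1 -> HasSumC z l2 -> l1 = l2.
Proof.
case=> a b [c d]; apply: complex_eq; [exact: HasSum_uniq a c | exact: HasSum_uniq b d].
Qed.

Lemma csum_eq z l : bddC z -> HasSumC z l -> csum z = l.
Proof. by move=> b h; apply: HasSumC_uniq (HasSumC_csum b) h. Qed.

Lemma HasSumC_ext z w l : (forall t, z t = w t) -> HasSumC z l -> HasSumC w l.
Proof.
move=> e [a b]; split; [apply: HasSum_ext a | apply: HasSum_ext b] => t; by rewrite e.
Qed.

Lemma HasSumC_add z w lz lw : HasSumC z lz -> HasSumC w lw ->
  HasSumC (fun t => z t + w t) (lz + lw).
Proof.
move=> [a b] [c d]; split.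
  by rewrite ReD; apply: HasSum_ext (HasSum_add a c) => t; rewrite ReD.
by rewrite ImD; apply: HasSum_ext (HasSum_add b d) => t; rewrite ImD.
Qed.

Lemma HasSumC_scale c z l : HasSumC z l -> HasSumC (fun t => c * z t) (c * l).
Proof.
move=> [a b]; split.
  rewrite ReM -mulNr; apply: HasSum_ext (HasSum_add (HasSum_scale (Re c) a) (HasSum_scale (- Im c) b)) => t.
  by rewrite ReM mulNr.
rewrite ImM; apply: HasSum_ext (HasSum_add (HasSum_scale (Re c) b) (HasSum_scale (Im c) a)) => t.
by rewrite ImM.
Qed.

Lemma HasSumC_conj z l : HasSumC z l -> HasSumC (fun t => conjc (z t)) (conjc l).
Proof.
move=> [a b]; split.
  by rewrite ReJ; apply: HasSum_ext a => t; rewrite ReJ.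
rewrite ImJ -mulN1r; apply: HasSum_ext (HasSum_scale (-1) b) => t; by rewrite ImJ mulN1r.
Qed.

Lemma HasSumC0 : HasSumC (fun _ => 0) 0.
Proof. split; exact: HasSum0. Qed.

Lemma HasSumC_big (J : Type) (r : seq J) (F : J -> T -> C) (L : J -> C) :
  (forall j, HasSumC (F j) (L j)) ->
  HasSumC (fun t => \sum_(j <- r) F j t) (\sum_(j <- r) L j).
Proof.
move=> H; elim: r => [|j r IH].
  by rewrite big_nil; apply: HasSumC_ext HasSumC0 => t; rewrite big_nil.
rewrite big_cons; apply: HasSumC_ext (HasSumC_add (H j) IH) => t; by rewrite big_cons.
Qed.

Definition l2b (f : T -> C) M := forall s, uniq s -> \sum_(x <- s) sqmod (f x) <= M.

Lemma l2_bound f : l2 f -> l2b f (fine (sqnorm f)) /\ sqnorm f = (fine (sqnorm f))%:E.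
Proof.
move=> h.
have g0 : (0 <= sqnorm f)%E by apply: (@esT_ge0 R T (fun t => sqmod (f t))) => t; exact: sqmod_ge0.
have fn : sqnorm f \is a fin_num by rewrite ge0_fin_numE.
split; last by rewrite fineK.
move=> s u; rewrite -lee_fin fineK //.
by apply: (@seq_le_esT R T (fun t => sqmod (f t))) => // t; exact: sqmod_ge0.
Qed.

Lemma bound_l2 f M : l2b f M -> l2 f.
Proof.
move=> h; rewrite /l2; apply: (@le_lt_trans _ _ M%:E); last exact: ltry.
apply: (@esT_le R T (fun t => sqmod (f t))) => // t; exact: sqmod_ge0.
Qed.

Lemma bddC_pconj p q : l2 p -> l2 q -> bddC (fun t => p t * conjc (q t)).
Proof.
move=> /l2_bound [hp _] /l2_bound [hq _].
have t1 : 0 < (1 : R) by [].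
have o1 : 1 * 1 = (1 : R) by rewrite mulr1.
split; exists ((fine (sqnorm p) + fine (sqnorm q)) / 2) => s u.
  apply: le_trans (_ : \sum_(x <- s) (1 * sqmod (p x) + 1 * sqmod (q x)) / 2 <= _).
    by apply: ler_sum => i _; exact: Re_pconj_le.
  rewrite -mulr_suml big_split /= -!mulr_sumr !mul1r ler_pM2r ?invr_gt0 ?ltr0n //.
  exact: lerD (hp s u) (hq s u).
apply: le_trans (_ : \sum_(x <- s) (1 * sqmod (p x) + 1 * sqmod (q x)) / 2 <= _).
  by apply: ler_sum => i _; exact: Im_pconj_le.
rewrite -mulr_suml big_split /= -!mulr_sumr !mul1r ler_pM2r ?invr_gt0 ?ltr0n //.
exact: lerD (hp s u) (hq s u).
Qed.

Lemma HasSumC_inner p q : l2 p -> l2 q -> HasSumC (fun t => p t * conjc (q t)) (inner p q).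
Proof. by move=> hp hq; apply: HasSumC_csum; exact: bddC_pconj. Qed.

Lemma inner_small p q e : l2 p -> 0 < e -> (sqnorm q < (e ^+ 2)%:E)%E ->
  `|Re (inner p q)| <= e * (fine (sqnorm p) + 1) / 2 /\
  `|Im (inner p q)| <= e * (fine (sqnorm p) + 1) / 2.
Proof.
move=> hp e0 hqe.
have hq : l2 q by rewrite /l2 (lt_trans hqe) // ltry.
have [HR HI] := HasSumC_inner hp hq.
have [bp _] := l2_bound hp.
have bq : forall s, uniq s -> \sum_(x <- s) sqmod (q x) <= e ^+ 2.
  move=> s u; rewrite -lee_fin; apply: le_trans (ltW hqe).
  by apply: (@seq_le_esT R T (fun t => sqmod (q t))) => // t; exact: sqmod_ge0.
have te : e * e^-1 = 1 by rewrite mulfV // gt_eqF.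
have key : forall s, uniq s -> \sum_(x <- s) (e * sqmod (p x) + e^-1 * sqmod (q x)) / 2
    <= e * (fine (sqnorm p) + 1) / 2.
  move=> s u; rewrite -mulr_suml big_split /= -!mulr_sumr ler_pM2r ?invr_gt0 ?ltr0n //.
  have h1 := bp s u; have h2 := bq s u.
  have : e^-1 * \sum_(i <- s) sqmod (q i) <= e^-1 * e ^+ 2 by rewrite ler_pM2l ?invr_gt0.
  rewrite expr2 mulrA mulVf ?gt_eqF // mul1r => h3.
  have : e * \sum_(i <- s) sqmod (p i) <= e * fine (sqnorm p) by rewrite ler_pM2l.
  move=> h4; rewrite mulrDr mulr1; lra.
split.
  apply: HasSum_bound HR _ => s u; apply: le_trans (ler_norm_sum _ _ _) _.
  apply: le_trans (key s u); apply: ler_sum => i _; exact: Re_pconj_le.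
apply: HasSum_bound HI _ => s u; apply: le_trans (ler_norm_sum _ _ _) _.
apply: le_trans (key s u); apply: ler_sum => i _; exact: Im_pconj_le.
Qed.
End CSum.
Lemma sum_delta (R : zmodType) (T : eqType) (s : seq T) (t : T) (c : R) : uniq s ->
  \sum_(x <- s) (if x == t then c else 0) = if t \in s then c else 0.
Proof.
elim: s => [|y s IH]; first by rewrite big_nil.
rewrite big_cons /= in_cons => /andP [ys us]; rewrite IH //.
case: (eqVneq y t) => [<-|yt]; first by rewrite (negPf ys) addr0.
rewrite add0r; case: (eqVneq t y) => // ty; by rewrite ty eqxx in yt.
Qed.

Lemma sum_pmap (R : realType) (T U : Type) (f : T -> option U) (G : U -> R) (s : seq T) :
  \sum_(x <- s) oapp G 0 (f x) = \sum_(p <- pmap f s) G p.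
Proof.
elim: s => [|x s IH]; first by rewrite !big_nil.
by rewrite big_cons /=; case: (f x) => [p|] /=; rewrite ?big_cons IH // add0r.
Qed.

Section FockL.
Variables (R : realType) (I : choiceType).
Local Notation C := R[i].
Local Notation W := (seq I).
Local Notation Re := (@complex.Re R).
Local Notation Im := (@complex.Im R).

Lemma TcreE (w : I -> C) (f : W -> C) b i : Tcre w f (rcons b i) = f b * w i.
Proof. by case: b => [|y b] //=; rewrite belast_rcons last_rcons. Qed.
Lemma Tcre0 (w : I -> C) (f : W -> C) : Tcre w f [::] = 0.
Proof. by []. Qed.

Definition unr (u : W) : option (W * I) :=
  if u is x :: s then Some (belast x s, last x s) else None.
Definition rc (p : W * I) : W := rcons p.1 p.2.
Lemma unr_oc : ocancel unr rc.
Proof. by case=> [|x s] //=; rewrite /rc /= -lastI. Qed.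
Lemma unr_rc p : unr (rc p) = Some p.
Proof. by case: p => [[|y b] i] //=; rewrite /rc /= belast_rcons last_rcons. Qed.
Lemma rc_inj : injective rc.
Proof. by move=> p q h; have := unr_rc p; rewrite h unr_rc => -[]. Qed.

Lemma Tcre_oapp (w : I -> C) (f : W -> C) (u : W) :
  Tcre w f u = oapp (fun p => f p.1 * w p.2) 0 (unr u).
Proof. by case: u. Qed.

Lemma sqmod0 : sqmod (0 : C) = 0. Proof. by rewrite /sqmod /= expr0n /= addr0. Qed.

Lemma sum_prod_le (G : W -> R) (H : I -> R) (s : seq W) MG MH :
  (forall b, 0 <= G b) -> (forall i, 0 <= H i) ->
  (forall s, uniq s -> \sum_(x <- s) G x <= MG) ->
  (forall s, uniq s -> \sum_(x <- s) H x <= MH) ->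
  uniq s -> \sum_(u <- s) oapp (fun p => G p.1 * H p.2) 0 (unr u) <= MG * MH.
Proof.
move=> G0 H0 hG hH us; rewrite sum_pmap.
set ps := pmap unr s.
have ups : uniq ps by apply: pmap_uniq unr_oc _ us.
set B := undup (map fst ps); set L := undup (map snd ps).
have uap : uniq [seq (x, y) | x <- B, y <- L].
  by apply: allpairs_uniq; rewrite ?undup_uniq // => p q _ _ /=; case: p; case: q.
have sub : {subset ps <= [seq (x, y) | x <- B, y <- L]}.
  move=> [b i] hp; apply/allpairsP; exists (b, i); split => //=.
    by rewrite mem_undup; apply/mapP; exists (b, i).
  by rewrite mem_undup; apply/mapP; exists (b, i).
apply: le_trans (sum_sub_le (fun p => mulr_ge0 (G0 p.1) (H0 p.2)) ups uap sub) _.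
rewrite big_allpairs /=.
have -> : \sum_(i1 <- B) \sum_(i2 <- L) G i1 * H i2 = (\sum_(b <- B) G b) * (\sum_(i <- L) H i).
  by rewrite big_distrl /=; apply: eq_bigr => b _; rewrite big_distrr.
apply: ler_pM; [by apply: sumr_ge0 | by apply: sumr_ge0 | exact: hG (undup_uniq _) | exact: hH (undup_uniq _)].
Qed.
End FockL.
Arguments rc {I}.
Arguments unr {I}.
Section FockM.
Variables (R : realType) (I : choiceType).
Local Notation C := R[i].
Local Notation W := (seq I).
Local Notation Re := (@complex.Re R).
Local Notation Im := (@complex.Im R).

Lemma Tcre_l2 (w : I -> C) (h : W -> C) : l2 w -> l2 h -> l2 (Tcre w h).
Proof.
move=> /l2_bound [bw _] /l2_bound [bh _].
apply: (@bound_l2 R W (Tcre w h) (fine (sqnorm h) * fine (sqnorm w))) => s us.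
have -> : \sum_(u <- s) sqmod (Tcre w h u) =
   \sum_(u <- s) oapp (fun p => sqmod (h p.1) * sqmod (w p.2)) 0 (unr u).
  by apply: eq_bigr => -[|x u] _ //=; rewrite ?sqmod0 // sqmodM.
apply: (@sum_prod_le R I (fun b => sqmod (h b)) (fun i => sqmod (w i))) => // *; exact: sqmod_ge0.
Qed.

Definition delta (xi : W) : W -> C := fun u => (u == xi)%:R.

Lemma sqmod_delta xi u : sqmod (delta xi u) = if u == xi then 1 else 0.
Proof.
rewrite /delta; case: (u == xi) => /=; rewrite /sqmod /=; last by rewrite expr0n /= addr0.
by rewrite expr1n expr0n /= addr0.
Qed.

Lemma delta_l2 xi : l2 (delta xi).
Proof.
apply: (@bound_l2 R W (delta xi) 1) => s us.
rewrite (eq_bigr _ (fun u _ => sqmod_delta xi u)) sum_delta //; by case: ifP.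
Qed.

Lemma l2_0 (T : choiceType) : l2 (fun _ : T => 0 : C).
Proof. by apply: (@bound_l2 R T (fun _ : T => 0 : C) 0) => s _; rewrite big1 // => i _; rewrite sqmod0. Qed.

Lemma inner_0 (T : choiceType) (g : T -> C) : l2 g -> inner g (fun _ => 0) = 0.
Proof.
move=> hg; apply: csum_eq; first exact: bddC_pconj hg (l2_0 _).
by apply: HasSumC_ext (@HasSumC0 R T) => t; rewrite conjc0 mulr0.
Qed.

Lemma zero_of_small (x K : R) : 0 <= K -> (forall e, 0 < e -> `|x| <= e * K) -> x = 0.
Proof.
move=> K0 H; apply: abs_lt_all => e e0.
have K1 : 0 < K + 1 by lra.
apply: le_lt_trans (H _ (divr_gt0 e0 K1)) _.
rewrite mulrAC ltr_pdivrMr // ltr_pM2l //; lra.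
Qed.

Lemma bdd_bound0 (T : choiceType) (a : T -> R) : bdd a ->
  exists2 M, 0 <= M & forall s, uniq s -> `|\sum_(x <- s) a x| <= M.
Proof.
move=> /bdd_sum_bound [M HM]; exists M => //.
by apply: le_trans (HM [::] isT); rewrite big_nil normr_ge0.
Qed.
End FockM.
Arguments delta {R I}.
Section FockP.
Variables (R : realType) (I : choiceType).
Local Notation C := R[i].
Local Notation W := (seq I).
Local Notation Re := (@complex.Re R).
Local Notation Im := (@complex.Im R).

Lemma conjcM' (x y : C) : conjc (x * y) = conjc x * conjc y.
Proof. by apply: complex_eq; rewrite !(ReM, ImM, ReJ, ImJ); ring. Qed.
Lemma conj_pconj (a b : C) : conjc (a * conjc b) = b * conjc a.
Proof. by apply: complex_eq; rewrite !(ReM, ImM, ReJ, ImJ); ring. Qed.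

Lemma sum_Wd (v w : I -> C) (g h : W -> C) (B : seq W) (L : seq I) :
  \sum_(u <- [::] :: map rc [seq (x, y) | x <- B, y <- L])
     (Tcre v g u * conjc (Tcre w h u)) =
  (\sum_(b <- B) g b * conjc (h b)) * (\sum_(i <- L) v i * conjc (w i)).
Proof.
rewrite big_cons Tcre0 mul0r add0r big_map big_allpairs big_distrl /=.
apply: eq_bigr => b _; rewrite big_distrr /=; apply: eq_bigr => i _.
by rewrite /rc /= !TcreE conjcM'; ring.
Qed.

Lemma Wd_uniq (B : seq W) (L : seq I) : uniq B -> uniq L ->
  uniq ([::] :: map rc [seq (x, y) | x <- B, y <- L]).
Proof.
move=> uB uL /=; apply/andP; split.
  by apply/mapP => -[[b i] _] /(congr1 size); rewrite /rc size_rcons.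
rewrite map_inj_uniq; last exact: rc_inj.
by apply: allpairs_uniq => // p q _ _; case: p; case: q.
Qed.

Lemma Wd_sub (s0 : seq W) (L : seq I) :
  {subset map snd (pmap unr s0) <= L} ->
  {subset s0 <= [::] :: map rc [seq (x, y) | x <- undup (map fst (pmap unr s0)), y <- L]}.
Proof.
move=> sL [|x s] hu; first exact: mem_head.
rewrite in_cons /=; apply/mapP; exists (belast x s, last x s); last by rewrite /rc /= -lastI.
have hp : (belast x s, last x s) \in pmap unr s0.
  by rewrite mem_pmap; apply/mapP; exists (x :: s).
apply/allpairsP; exists (belast x s, last x s); split => //=.
  by rewrite mem_undup; apply/mapP; exists (belast x s, last x s).
by apply: sL; apply/mapP; exists (belast x s, last x s).
Qed.

Lemma abs_prod_le (a b c d M N e : R) : `|a| <= M -> `|c| <= N -> `|b| <= e -> `|d| <= e ->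
  `|a * b - c * d| <= e * (M + N).
Proof.
move=> ha hc hb hd; apply: le_trans (ler_normB _ _) _; rewrite !normrM mulrDr.
apply: lerD; rewrite mulrC; apply: ler_pM => //.
Qed.
Lemma abs_prod_le2 (a b c d M N e : R) : `|a| <= M -> `|c| <= N -> `|b| <= e -> `|d| <= e ->
  `|a * b + c * d| <= e * (M + N).
Proof.
move=> ha hc hb hd; apply: le_trans (ler_normD _ _) _; rewrite !normrM mulrDr.
apply: lerD; rewrite mulrC; apply: ler_pM => //.
Qed.

Lemma inner_Tcre_orth (v w : I -> C) (g h : W -> C) :
  l2 v -> l2 w -> inner w v = 0 -> l2 g -> l2 h ->
  inner (Tcre v g) (Tcre w h) = 0.
Proof.
move=> hv hw hwv hg hh.
have [HR HI] := HasSumC_inner (Tcre_l2 hv hg) (Tcre_l2 hw hh).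
set X := inner _ _ in HR HI *.
have [CR CI] : HasSumC (fun i => v i * conjc (w i)) 0.
  have := HasSumC_conj (HasSumC_inner hw hv); rewrite hwv conjc0.
  by apply: HasSumC_ext => i; exact: conj_pconj.
have [bAR bAI] := bddC_pconj hg hh.
have [MA MA0 HMA] := bdd_bound0 bAR.
have [MB MB0 HMB] := bdd_bound0 bAI.
have K0 : 0 <= 1 + (MA + MB) by lra.
have main : forall e, 0 < e ->
   `|Re X| <= e * (1 + (MA + MB)) /\ `|Im X| <= e * (1 + (MA + MB)).
  move=> e e0.
  have [s1 S1] := HR e e0; have [s2 S2] := HI e e0.
  have [c1 C1] := CR e e0; have [c2 C2] := CI e e0.
  set s0 := s1 ++ s2.
  set B := undup (map fst (pmap unr s0)).
  set L := undup (map snd (pmap unr s0) ++ c1 ++ c2).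
  have uL : uniq L := undup_uniq _.
  have uB : uniq B := undup_uniq _.
  have subL : {subset map snd (pmap unr s0) <= L}.
    by move=> x hx; rewrite mem_undup mem_cat hx.
  have sub := Wd_sub subL.
  set Wd := [::] :: _ in sub.
  have uW : uniq Wd := Wd_uniq uB uL.
  have sW1 : {subset s1 <= Wd} by move=> x hx; apply: sub; rewrite mem_cat hx.
  have sW2 : {subset s2 <= Wd} by move=> x hx; apply: sub; rewrite mem_cat hx orbT.
  have sL1 : {subset c1 <= L} by move=> x hx; rewrite mem_undup !mem_cat hx orbT.
  have sL2 : {subset c2 <= L} by move=> x hx; rewrite mem_undup !mem_cat hx !orbT.
  have A1 := S1 Wd uW sW1.
  have A2 := S2 Wd uW sW2.
  have B1 := C1 L uL sL1.
  have B2 := C2 L uL sL2.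
  rewrite -Re_sum in A1; rewrite -Im_sum in A2.
  rewrite -Re_sum Re0 sub0r normrN in B1; rewrite -Im_sum Im0 sub0r normrN in B2.
  rewrite /Wd sum_Wd in A1 A2.
  have hRA := HMA B uB; have hIA := HMB B uB.
  rewrite -Re_sum in hRA; rewrite -Im_sum in hIA.
  set SA := \sum_(b <- B) _ in A1 A2 hRA hIA.
  set SC := \sum_(i <- L) _ in A1 A2 B1 B2.
  rewrite ReM in A1; rewrite ImM in A2.
  have P1 := abs_prod_le hRA hIA (ltW B1) (ltW B2).
  have P2 := abs_prod_le2 hRA hIA (ltW B2) (ltW B1).
  split.
    have := ler_normD (Re X - (Re SA * Re SC - Im SA * Im SC)) (Re SA * Re SC - Im SA * Im SC).
    rewrite subrK mulrDr mulr1 => h1; lra.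
  have := ler_normD (Im X - (Re SA * Im SC + Im SA * Re SC)) (Re SA * Im SC + Im SA * Re SC).
  rewrite subrK mulrDr mulr1 => h1; lra.
apply: complex_eq.
  by rewrite Re0; apply: zero_of_small K0 _ => e e0; case: (main e e0).
by rewrite Im0; apply: zero_of_small K0 _ => e e0; case: (main e e0).
Qed.
End FockP.
Section Dir1.
Variables (R : realType) (I : choiceType).
Local Notation C := R[i].
Local Notation W := (seq I).
Local Notation Re := (@complex.Re R).
Local Notation Im := (@complex.Im R).
Local Notation Om := (@Omega R I).

Lemma conj_sum (J : Type) (r : seq J) (F : J -> C) :
  conjc (\sum_(j <- r) F j) = \sum_(j <- r) conjc (F j).
Proof.
elim: r => [|j r IH]; rewrite ?big_nil ?big_cons ?conjc0 // -IH.
by apply: complex_eq; rewrite !(ReD, ImD, ReJ, ImJ) // opprD.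
Qed.

Lemma Omega_delta : Om = delta [::].
Proof. by []. Qed.

Lemma lhs_orth (v : I -> C) (g q : W -> C) : l2 v -> l2 g -> lhs_set v q ->
  l2 q /\ inner (Tcre v g) q = 0.
Proof.
move=> hv hg [[c ->]|[w [hw hwv] [h hh ->]]]; last first.
  split; first exact: Tcre_l2.
  exact: inner_Tcre_orth.
have lq : l2 (fun u => c * Om u).
  apply: (@bound_l2 R W (fun u => c * Om u) (sqmod c)) => s us.
  under eq_bigr do rewrite sqmodM Omega_delta sqmod_delta.
  rewrite -mulr_sumr sum_delta //; case: ifP => _; rewrite ?mulr1 ?mulr0 //.
  exact: sqmod_ge0.
split => //; apply: csum_eq; first exact: bddC_pconj (Tcre_l2 hv hg) lq.
apply: HasSumC_ext (@HasSumC0 R W) => -[|x s]; first by rewrite Tcre0 mul0r.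
by rewrite (_ : Om (x :: s) = 0) // mulr0 conjc0 mulr0.
Qed.

Lemma lspan_HasSum (v : I -> C) (g h : W -> C) : l2 v -> l2 g -> lspan (lhs_set v) h ->
  HasSumC (fun t => Tcre v g t * conjc (h t)) 0.
Proof.
move=> hv hg [n [c [gk [Hg ->]]]].
have Hk : forall k, HasSumC (fun t => conjc (c k) * (Tcre v g t * conjc (gk k t))) (conjc (c k) * 0).
  move=> k; apply: HasSumC_scale; have [lq iq] := lhs_orth hv hg (Hg k).
  rewrite -iq; exact: HasSumC_inner (Tcre_l2 hv hg) lq.
have := HasSumC_big (index_enum 'I_n) Hk.
rewrite big1 => [H|k _]; last by rewrite mulr0.
apply: HasSumC_ext H => t.
rewrite conj_sum mulr_sumr; apply: eq_bigr => k _; by rewrite conjcM' mulrCA.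
Qed.
End Dir1.
Section Dir1b.
Variables (R : realType) (I : choiceType).
Local Notation C := R[i].
Local Notation W := (seq I).
Local Notation Re := (@complex.Re R).
Local Notation Im := (@complex.Im R).

Lemma sub1 (v : I -> C) (f : W -> C) : l2 v -> cspan (lhs_set v) f -> ker_adj (Tcre v) f.
Proof.
move=> hv [hf Happ]; split => //; split; first exact: l2_0.
move=> g hg; rewrite inner_0 //.
have hp := Tcre_l2 hv hg.
have [bp _] := l2_bound hp.
set N := fine (sqnorm (Tcre v g)) in bp *.
have N0 : 0 <= N by have := bp [::] isT; rewrite big_nil.
have K0 : 0 <= (N + 1) / 2 by rewrite divr_ge0 //; lra.
set X := inner (Tcre v g) f.
have main : forall e, 0 < e -> `|Re X| <= e * ((N + 1) / 2) /\ `|Im X| <= e * ((N + 1) / 2).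
  move=> e e0; have [h hh hsm] := Happ e e0.
  have lfh : l2 (fun u => f u - h u) by rewrite /l2 (lt_trans hsm) // ltry.
  have H1 := HasSumC_inner hp lfh.
  have H2 := lspan_HasSum hv hg hh.
  have H3 := HasSumC_add H1 H2.
  have H4 : HasSumC (fun t => Tcre v g t * conjc (f t)) (inner (Tcre v g) (fun u => f u - h u) + 0).
    apply: HasSumC_ext H3 => t; rewrite -mulrDr; congr (_ * _).
    by apply: complex_eq; rewrite !(ReD, ImD, ReJ, ImJ, ReN, ImN); ring.
  have -> : X = inner (Tcre v g) (fun u => f u - h u) + 0.
    exact: HasSumC_uniq (HasSumC_inner hp hf) H4.
  rewrite addr0 mulrA; exact: inner_small hp e0 hsm.
apply: complex_eq.
  by rewrite Re0; apply: zero_of_small K0 _ => e e0; case: (main e e0).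
by rewrite Im0; apply: zero_of_small K0 _ => e e0; case: (main e e0).
Qed.
End Dir1b.
Section Dir2.
Variables (R : realType) (I : choiceType).
Local Notation C := R[i].
Local Notation W := (seq I).
Local Notation Re := (@complex.Re R).
Local Notation Im := (@complex.Im R).
Local Notation Om := (@Omega R I).

Definition pinv (xi : W) (u : W) : option I :=
  if unr u is Some p then (if p.1 == xi then Some p.2 else None) else None.

Lemma pinv_oc xi : ocancel (pinv xi) (rcons xi).
Proof.
case=> [|x s] //=; rewrite /pinv /=; case: eqP => //= <-; by rewrite -lastI.
Qed.

Lemma pinv_rc xi i : pinv xi (rcons xi i) = Some i.
Proof. by rewrite /pinv (unr_rc (xi, i)) /= eqxx. Qed.

Lemma HasSum_transport xi (a : W -> R) (b : I -> R) l :
  (forall u, a u = oapp b 0 (pinv xi u)) -> HasSum b l -> HasSum a l.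
Proof.
move=> ab Hb e e0; have [s0 S] := Hb e e0.
exists (map (rcons xi) s0) => s us sub.
rewrite (eq_bigr _ (fun u _ => ab u)) sum_pmap.
apply: S; first exact: pmap_uniq (pinv_oc xi) _ us.
move=> i hi; rewrite mem_pmap; apply/mapP; exists (rcons xi i); last by rewrite pinv_rc.
by apply: sub; apply/mapP; exists i.
Qed.

Lemma HasSumC_transport xi (a : W -> C) (b : I -> C) l :
  (forall u, a u = oapp b 0 (pinv xi u)) -> HasSumC b l -> HasSumC a l.
Proof.
move=> ab [H1 H2]; split.
  by apply: (@HasSum_transport xi _ _ _ _ H1) => u; rewrite ab; case: pinv.
by apply: (@HasSum_transport xi _ _ _ _ H2) => u; rewrite ab; case: pinv.
Qed.

Definition wxi (f : W -> C) (xi : W) : I -> C := fun i => f (rcons xi i).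

Lemma wxi_l2 f xi : l2 f -> l2 (wxi f xi).
Proof.
move=> /l2_bound [bf _].
apply: (@bound_l2 R I (wxi f xi) (fine (sqnorm f))) => s us.
rewrite /wxi -(big_map (rcons xi) xpredT (fun u => sqmod (f u))); apply: bf.
by rewrite map_inj_uniq // => i j /rcons_inj [].
Qed.

Lemma wxi_orth (v : I -> C) f xi : l2 v -> l2 f ->
  inner (Tcre v (delta xi)) f = 0 -> inner (wxi f xi) v = 0.
Proof.
move=> hv hf h0.
have H1 : HasSumC (fun i => v i * conjc (wxi f xi i)) (conjc (inner (wxi f xi) v)).
  have := HasSumC_conj (HasSumC_inner (wxi_l2 xi hf) hv).
  by apply: HasSumC_ext => i; exact: conj_pconj.
have H2 : HasSumC (fun u => Tcre v (delta xi) u * conjc (f u)) (conjc (inner (wxi f xi) v)).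
  apply: (@HasSumC_transport xi _ _ _ _ H1) => -[|x s]; first by rewrite Tcre0 mul0r.
  rewrite /pinv /= /delta /wxi; case: (eqVneq (belast x s) xi) => [e|ne] /=.
    by rewrite mul1r -e -lastI.
  by rewrite !mul0r.
have := HasSumC_uniq (HasSumC_inner (Tcre_l2 hv (delta_l2 R xi)) hf) H2.
rewrite h0 => /(congr1 conjc); by rewrite conjcK conjc0.
Qed.
End Dir2.
Section Dir2b.
Variables (R : realType) (I : choiceType).
Local Notation C := R[i].
Local Notation W := (seq I).
Local Notation Re := (@complex.Re R).
Local Notation Im := (@complex.Im R).
Local Notation Om := (@Omega R I).

Definition cf (f : W -> C) (k : nat) : C := if k is 0 then f [::] else 1.
Definition gf (f : W -> C) (Bs : seq W) (k : nat) : W -> C :=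
  if k is j.+1 then Tcre (wxi f (nth [::] Bs j)) (delta (nth [::] Bs j)) else Om.

Lemma hval f Bs u : uniq Bs ->
  \sum_(k < (size Bs).+1) cf f k * gf f Bs k u =
  if unr u is Some p then (if p.1 \in Bs then f u else 0) else f [::].
Proof.
move=> uB; rewrite big_ord_recl /=.
under eq_bigr do rewrite add0n.
have -> : \sum_(i < size Bs) 1 * Tcre (wxi f (nth [::] Bs i)) (delta (nth [::] Bs i)) u =
          \sum_(x <- Bs) 1 * Tcre (wxi f x) (delta x) u.
  by rewrite (big_nth [::]) big_mkord.
case: u => [|x s] /=.
  rewrite big1 ?addr0 => [|x' _]; last by rewrite mulr0.
  by rewrite mulr1.
rewrite mulr0 add0r.
rewrite (eq_bigr (fun x' => if x' == belast x s then f (x :: s) else 0)).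
  by rewrite sum_delta.
move=> x' _; rewrite mul1r /delta /wxi; case: (eqVneq x' (belast x s)) => [->|ne].
  by rewrite mulr1n mul1r -lastI.
by rewrite mulr0n mul0r.
Qed.
End Dir2b.
Section Dir2c.
Variables (R : realType) (I : choiceType).
Local Notation C := R[i].
Local Notation W := (seq I).
Local Notation Om := (@Omega R I).

Lemma sub2 (v : I -> C) (f : W -> C) : l2 v -> ker_adj (Tcre v) f -> cspan (lhs_set v) f.
Proof.
move=> hv [hf [_ hk]]; split => // e e0.
have hk0 : forall xi, inner (Tcre v (delta xi)) f = 0.
  by move=> xi; rewrite hk ?inner_0 //; exact: delta_l2.
have [bf fE] := l2_bound hf.
set Nf := fine (sqnorm f) in bf fE.
have e20 : 0 < e ^+ 2 / 2 by rewrite divr_gt0 // exprn_gt0.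
have fin : esT (fun t => sqmod (f t)) \is a fin_num by rewrite /esT -/(sqnorm f) fE.
have [s0 us0 Hs0] := esT_approx (fun t => sqmod_ge0 (f t)) fin e20.
have NfE : fine (esT (fun t => sqmod (f t))) = Nf by [].
rewrite NfE in Hs0.
set Bs := undup (map fst (pmap unr s0)).
have uB : uniq Bs := undup_uniq _.
exists (fun u => \sum_(k < (size Bs).+1) cf f k * gf f Bs k u).
  exists (size Bs).+1, (fun k => cf f k), (fun k => gf f Bs k); split => //.
  case=> [[|j] hj] /=.
    by left; exists 1; apply: funext => u; rewrite mul1r.
  right; exists (wxi f (nth [::] Bs j)).
    by split; [exact: wxi_l2 | exact: wxi_orth (hk0 _)].
  by exists (delta (nth [::] Bs j)) => //; exact: delta_l2.
set cnd := fun u : W => if unr u is Some p then p.1 \notin Bs else false.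
have pt : forall u, sqmod (f u - \sum_(k < (size Bs).+1) cf f k * gf f Bs k u) =
    if cnd u then sqmod (f u) else 0.
  move=> u; rewrite hval //; rewrite /cnd; case: u => [|x s] /=; first by rewrite subrr sqmod0.
  by case: ifP => _ /=; rewrite ?subrr ?sqmod0 ?subr0.
have le : (sqnorm (fun u => (f u - \sum_(k < (size Bs).+1) cf f k * gf f Bs k u)%R)
           <= (e ^+ 2 / 2)%:E)%E.
  apply: (@esT_le R W (fun u => sqmod (f u - \sum_(k < (size Bs).+1) cf f k * gf f Bs k u))).
    by move=> t; exact: sqmod_ge0.
  move=> s us.
  rewrite (eq_bigr _ (fun u _ => pt u)) -big_mkcond -big_filter.
  have hcat : uniq ([seq x <- s | cnd x] ++ s0).
    rewrite cat_uniq filter_uniq // us0 andbT /=; apply/hasPn => x hx.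
    rewrite mem_filter negb_and; apply/orP; left.
    rewrite /cnd; case: x hx => [|y t] hx //=; rewrite negbK mem_undup.
    apply/mapP; exists (belast y t, last y t) => //; rewrite mem_pmap; apply/mapP.
    by exists (y :: t).
  have := bf _ hcat; rewrite big_cat /= => h; lra.
apply: le_lt_trans le _; rewrite lte_fin ltr_pdivrMr // ltr_pMr ?exprn_gt0 //.
by rewrite ltr1n.
Qed.
End Dir2c.

Theorem corollary3p13 (R : realType) (I : choiceType)
  (dimN : exists i j : I, i <> j)
  (v : I -> R[i]) (Hv : Hsp v) (v_unit : sqnorm v = 1%E) :
  cspan (lhs_set v) = ker_adj (Tcre v).
Proof.
apply/seteqP; split => f.
  exact: sub1.
exact: sub2.
Qed.
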